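(* Let $(I_t)_{t\in\mathbb{Z}}$ be a stochastic process such that there exists a family $(I_t^n)_{t\in\mathbb{Z}}$, $n\in\mathbb{N}$, of $\{0,1\}$-valued stationary stochastic processes with $P(I_0^n=1)>0$ for all $n$ and $$\mathcal{L}\bigl((I_t^n)_{t\in\{-u,\dots,v\}}\mid I_0^n=1\bigr)\Longrightarrow \mathcal{L}\bigl((I_t)_{t\in\{-u,\dots,v\}}\bigr)\quad (n\to\infty)$$ for all $u,v\in\mathbb{N}$. Define $S_+^i=\sum_{t=1}^\infty I_t$ and $S_-^i=\sum_{t=1}^\infty I_{-t}$ (values in $\mathbb{N}_0\cup\{\infty\}$). (a) The law of $(S_-^i,S_+^i)$ is symmetric (in particular $S_-^i$ and $S_+^i$ have the same distribution; let $S^i_{\pm}$ denote a random variable with this common distribution), and for all $k,\ell\in\mathbb{N}_0$, $$P(S_+^i=k,\ S_-^i\ge \ell)=P(S^i_{\pm}=k+\ell),$$ $$P(S_+^i=k,\ S_-^i=\ell)=P(S^i_{\pm}=k+\ell)-P(S^i_{\pm}=k+\ell+1).$$ (b) The common probability mass function of $S_-^i$ and $S_+^i$ is nonincreasing on $\mathbb{N}_0$: $P(S^i_{\pm}=k)\ge P(S^i_{\pm}=k+1)$ for all $k\in\mathbb{N}_0$.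
   Context: $\mathbb{N}_0=\{0,1,2,\dots\}$. $\mathcal{L}(\cdot\mid\cdot)$ denotes conditional law and $\Longrightarrow$ convergence in distribution. *)

(* Defs.v *)
From HB Require Import structures.
From mathcomp Require Import all_boot all_order all_algebra.
From mathcomp Require Import all_classical all_reals all_analysis measurable_realfun.
Set Implicit Arguments. Unset Strict Implicit. Unset Printing Implicit Defensive.
Import Order.TTheory GRing.Theory Num.Theory.
Local Open Scope classical_set_scope.
Local Open Scope ring_scope.

(* A {0,1}-valued process indexed by Z is modelled as X : int -> Omega -> bool
   (true = 1, false = 0). *)

Definition cyl (Omega : Type) (X : int -> Omega -> bool) (u v : nat)
  (p : int -> bool) : set Omega :=
  [set w | forall t : int, (- (u%:Z) <= t <= v%:Z) -> X t w = p t].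

Definition bproc_measurable d (Omega : measurableType d)
  (X : int -> Omega -> bool) : Prop :=
  forall t : int, measurable [set w | X t w].

Definition bstationary d (Omega : measurableType d) (R : realType)
  (P : probability Omega R) (X : int -> Omega -> bool) : Prop :=
  forall (u v : nat) (p : int -> bool) (s : int),
    P (cyl X u v p) = P (cyl (fun t => X (t + s)) u v p).

Definition pr d (Omega : measurableType d) (R : realType)
  (P : probability Omega R) (A : set Omega) : R := fine (P A).

Definition Splus (R : realType) (Omega : Type) (X : int -> Omega -> bool)
  (w : Omega) : \bar R :=
  (\sum_(0 <= k <oo) ((nat_of_bool (X (k.+1)%:Z w))%:R)%:E)%E.

Definition Sminus (R : realType) (Omega : Type) (X : int -> Omega -> bool)
  (w : Omega) : \bar R :=
  (\sum_(0 <= k <oo) ((nat_of_bool (X (- (k.+1)%:Z) w))%:R)%:E)%E.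

(* Main.v *)
Require Import Defs.
From HB Require Import structures.
From mathcomp Require Import all_boot all_order all_algebra.
From mathcomp Require Import all_classical all_reals all_analysis measurable_realfun.
Import Order.TTheory GRing.Theory Num.Theory numFieldNormedType.Exports.
Local Open Scope classical_set_scope.
Local Open Scope ring_scope.
Set Implicit Arguments. Unset Strict Implicit.
From mathcomp Require Import zify.

Section Cnt.
Definition cnt (x : int -> bool) (a : int) (n : nat) : nat := (\sum_(i < n) x (a + i%:Z)%R)%N.

Lemma cntD x a n m : cnt x a (n + m) = (cnt x a n + cnt x (a + n%:Z)%R m)%N.
Proof.
rewrite /cnt big_split_ord /=; congr (_ + _)%N; apply: eq_bigr => i _ /=.
by rewrite PoszD addrA.
Qed.

Lemma cnt0 x a : cnt x a 0 = 0%N.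
Proof. by rewrite /cnt big_ord0. Qed.

Lemma cnt1 x a : cnt x a 1 = x a.
Proof. by rewrite /cnt big_ord1 addr0. Qed.

Lemma cntS x a n : cnt x a n.+1 = (cnt x a n + x (a + n%:Z)%R)%N.
Proof. by rewrite -addn1 cntD cnt1. Qed.

Lemma cntSl x a n : cnt x a n.+1 = (x a + cnt x (a + 1)%R n)%N.
Proof. by rewrite -add1n cntD cnt1. Qed.

Lemma cnt_shift x s a n : cnt (fun t => x (t + s)) a n = cnt x (a + s) n.
Proof. by apply: eq_bigr => i _; rewrite addrAC. Qed.

Lemma cnt_ext x y a n : (forall i, (i < n)%N -> x (a + i%:Z) = y (a + i%:Z)) ->
  cnt x a n = cnt y a n.
Proof. by move=> h; apply: eq_bigr => i _; rewrite h. Qed.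

Lemma cnt_prefix x a n m : (n <= m)%N -> (cnt x a n <= cnt x a m)%N.
Proof. by move=> nm; rewrite -(subnKC nm) cntD leq_addr. Qed.

Lemma cnt_pos (x : int -> bool) a n i : (i < n)%N -> x (a + i%:Z) -> (0 < cnt x a n)%N.
Proof.
move=> lin xi; rewrite -(subnKC lin) cntD cntS xi addn1 addSn.
by [].
Qed.

Lemma first_one (x : int -> bool) a n : (0 < cnt x a n)%N ->
  exists2 i, (i < n)%N & x (a + i%:Z) /\ cnt x a i = 0%N.
Proof.
elim: n => [|n IH]; first by rewrite cnt0.
rewrite cntS; case: (posnP (cnt x a n)) => [c0|cp] h.
  by exists n => //; split => //; move: h; rewrite c0; case: (x _).
by case: (IH cp) => i lin hi; exists i => //; apply: ltnW.
Qed.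

Lemma cnt_rev x a n : cnt (fun t => x (- t)) a n = cnt x (- (a + n%:Z) + 1) n.
Proof.
rewrite /cnt (reindex_inj rev_ord_inj) /=; apply: eq_bigr => i _.
congr x. have hi := ltn_ord i. lia.
Qed.

Lemma test (a b : int) (n : nat) : (n < 3)%N -> a + n%:Z <= b -> a + 2 <= b + 2 - n%:Z.
Proof. lia. Qed.
End Cnt.
Section Series.
Variable R : realType.
Local Open Scope ereal_scope.

Lemma Splus_partial (T : Type) (X : int -> T -> bool) w n :
  \sum_(0 <= k < n) ((nat_of_bool (X (k.+1)%:Z w))%:R)%:E
  = ((cnt (fun t => X t w) 1 n)%:R)%:E :> \bar R.
Proof.
by rewrite big_mkord sumEFin natr_sum /cnt.
Qed.

Lemma Splus_sup (T : Type) (X : int -> T -> bool) w :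
  Splus R X w = ereal_sup (range (fun n => ((cnt (fun t => X t w) 1 n)%:R)%:E)).
Proof.
rewrite /Splus.
have h0 : forall n, (0 <= n)%N -> true -> (0 : \bar R) <= ((nat_of_bool (X (n.+1)%:Z w))%:R)%:E.
  by move=> n _ _; rewrite lee_fin.
move/ereal_nondecreasing_series/ereal_nondecreasing_cvgn/cvg_lim : h0 => -> //.
congr ereal_sup; apply/funext => y; apply/propext; split => -[n _ <-]; exists n => //;
  by rewrite Splus_partial.
Qed.

Lemma Splus_le (T : Type) (X : int -> T -> bool) w n :
  (forall N, (cnt (fun t => X t w) 1 N <= n)%N) -> Splus R X w <= (n%:R)%:E.
Proof.
move=> h; rewrite Splus_sup; apply: ge_ereal_sup => _ [N _ <-].
by rewrite lee_fin ler_nat.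
Qed.

Lemma Splus_ge (T : Type) (X : int -> T -> bool) w n :
  ((n%:R)%:E <= Splus R X w) <-> exists N, (n <= cnt (fun t => X t w) 1 N)%N.
Proof.
split; last first.
  move=> [N hN]; rewrite Splus_sup; apply: le_trans (ereal_sup_ubound _).
    2: by exists N.
  by rewrite lee_fin ler_nat.
case: n => [|n] hS; first by exists 0%N.
apply: contrapT => hn.
have h N : (cnt (fun t => X t w) 1 N <= n)%N.
  by rewrite leqNgt; apply/negP => hc; apply: hn; exists N.
have := le_trans hS (@Splus_le T X w n h); rewrite lee_fin ler_nat ltnn //.
Qed.

Lemma Splus_ge0 (T : Type) (X : int -> T -> bool) w : 0 <= Splus R X w.
Proof. by have /Splus_ge : exists N, (0 <= cnt (fun t => X t w) 1 N)%N by exists 0%N. Qed.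

Lemma Splus_val (T : Type) (X : int -> T -> bool) w :
  Splus R X w = +oo \/ exists n, Splus R X w = (n%:R)%:E.
Proof.
have [hall|hn] := pselect (forall n : nat, (n%:R)%:E <= Splus R X w).
  left; move: hall (@Splus_ge0 T X w); case: (Splus R X w) => // r hall _.
  have := hall (Num.truncn r).+1; rewrite lee_fin => h.
  by have := lt_le_trans (truncnS_gt r) h; rewrite ltxx.
right.
have hex : exists n, ~~ ((n%:R)%:E <= Splus R X w).
  by apply: contrapT => hc; apply: hn => n; apply: contrapT => hc'; apply: hc; exists n; apply/negP.
case: (ex_minnP hex) => m hm hmin.
case: m hm hmin => [|m] hm hmin; first by rewrite Splus_ge0 in hm.
exists m; apply/eqP; rewrite eq_le; apply/andP; split; last first.
  by have := hmin m; rewrite ltnn; case: (_ <= _) => //; move=> /(_ isT).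
apply: (@Splus_le T X w m) => N; rewrite leqNgt; apply/negP => hc.
by move/negP: hm; apply; apply/Splus_ge; exists N.
Qed.
End Series.
Definition agree (N : nat) (x y : int -> bool) :=
  forall t : int, (- (N%:Z) <= t <= N%:Z)%R -> x t = y t.
Definition wind (N : nat) (H : (int -> bool) -> bool) :=
  forall x y, agree N x y -> H x = H y.
Definition windowed H := exists N, wind N H.

Lemma absz_bounds (t : int) : (- (absz t)%:Z <= t <= (absz t)%:Z)%R.
Proof. by case: t => n /=; rewrite ?NegzE; apply/andP; split; lia. Qed.

Lemma wind_mono N M H : (N <= M)%N -> wind N H -> wind M H.
Proof. move=> NM h x y a; apply: h => t /andP[t1 t2]; apply: a; apply/andP; split; lia. Qed.

Lemma windowed_big H : windowed H -> exists N, (0 < N)%N /\ wind N H.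
Proof. by case=> N h; exists N.+1; split => //; apply: wind_mono h. Qed.

Lemma windowed_and H1 H2 : windowed H1 -> windowed H2 ->
  windowed (fun x => H1 x && H2 x).
Proof.
move=> [N1 h1] [N2 h2]; exists (maxn N1 N2) => x y a.
rewrite (wind_mono (leq_maxl N1 N2) h1 a) (wind_mono (leq_maxr N1 N2) h2 a) //.
Qed.

Lemma windowed_pt (F : bool -> bool) t : windowed (fun x => F (x t)).
Proof. by exists (absz t) => x y a; rewrite a // absz_bounds. Qed.

Lemma windowed_cnt (F : nat -> bool) a n : windowed (fun x => F (cnt x a n)).
Proof.
exists (absz a + n)%N => x y ag; congr F; apply: cnt_ext => i lin; apply: ag.
have := absz_bounds a; move=> /andP[h1 h2]; apply/andP; split; lia.
Qed.

Lemma windowed_shift H s : windowed H -> windowed (fun x => H (fun t => x (t + s)%R)).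
Proof.
move=> [N h]; exists (N + absz s)%N => x y ag; apply: h => t /andP[t1 t2]; apply: ag.
have := absz_bounds s; move=> /andP[h1 h2]; apply/andP; split; lia.
Qed.

Lemma windowed_neg H : windowed H -> windowed (fun x => H (fun t => x (- t)%R)).
Proof.
move=> [N h]; exists N => x y ag; apply: h => t /andP[t1 t2]; apply: ag.
apply/andP; split; lia.
Qed.

Definition ev (T : Type) (X : int -> T -> bool) H := [set w : T | H (fun t => X t w)].

Section Decomp.
Variable N : nat.
Definition FF := {ffun 'I_(N + N).+1 -> bool}.
Definition rp (f : FF) : int -> bool := fun t => f (inord (absz (t + N%:Z)%R)).
Definition wn (x : int -> bool) : FF := [ffun i : 'I_(N + N).+1 => x ((i : nat)%:Z - N%:Z)%R].

Lemma W1 x : agree N (rp (wn x)) x.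
Proof.
move=> t /andP[t1 t2]; rewrite /rp ffunE inordK; last by lia.
by congr x; lia.
Qed.

Lemma W2 (f : FF) (i : 'I_(N + N).+1) : rp f ((i : nat)%:Z - N%:Z)%R = f i.
Proof.
rewrite /rp; congr (f _); apply: val_inj => /=; rewrite inordK; last by have := ltn_ord i; lia.
by lia.
Qed.

Lemma W2win (i : 'I_(N + N).+1) :
  (- (N%:Z) <= (i : nat)%:Z - N%:Z <= N%:Z)%R.
Proof. by have := ltn_ord i; move=> h; apply/andP; split; lia. Qed.
End Decomp.
Section Meas.
Context (d : measure_display) (T : measurableType d) (R : realType).
Variable P : probability T R.

Lemma meas_eqb (X : int -> T -> bool) t b : bproc_measurable X ->
  measurable [set w | X t w = b].
Proof.
move=> mX; case: b; first exact: mX.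
have -> : [set w | X t w = false] = ~` [set w | X t w].
  by apply/seteqP; split => w /=; case: (X t w).
exact: measurableC.
Qed.

Lemma cylE (X : int -> T -> bool) N p : cyl X N N p =
  \bigcap_(i : nat) (if (i <= N + N)%N then [set w | X (i%:Z - N%:Z)%R w = p (i%:Z - N%:Z)%R] else setT).
Proof.
apply/seteqP; split => w /=.
  move=> h i _; case: ifP => // hi; apply: h; apply/andP; split; lia.
move=> h t /andP[t1 t2].
have := h (absz (t + N%:Z)%R) I; rewrite ifT; last by lia.
by have -> : ((absz (t + N%:Z)%R)%:Z - N%:Z)%R = t by lia.
Qed.

Lemma cyl_meas (X : int -> T -> bool) N p : bproc_measurable X ->
  measurable (cyl X N N p).
Proof.
move=> mX; rewrite cylE; apply: bigcapT_measurable => i.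
by case: ifP => _ //; apply: meas_eqb.
Qed.

Lemma in_bigU (I : eqType) (s : seq I) (q : pred I) (F : I -> set T) w :
  (\big[setU/set0]_(i <- s | q i) F i) w <-> exists i, [/\ i \in s, q i & F i w].
Proof.
elim: s => [|a s IH]; first by rewrite big_nil; split => // -[i []].
rewrite big_cons; case: ifP => qa.
  split.
    by case => [Fa|/IH [i [i1 i2 i3]]]; [exists a; rewrite mem_head|exists i; rewrite in_cons i1 orbT].
  move=> [i [+ qi Fi]]; rewrite in_cons => /orP [/eqP ia|iis]; first by left; rewrite -ia.
  by right; apply/IH; exists i.
split; first by move/IH => [i [i1 i2 i3]]; exists i; rewrite in_cons i1 orbT.
move=> [i [+ qi Fi]]; rewrite in_cons => /orP [/eqP ia|iis]; first by rewrite -ia qi in qa.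
by apply/IH; exists i.
Qed.

Lemma measure_big_seq (I : eqType) (s : seq I) (q : pred I) (F : I -> set T) :
  uniq s -> (forall i, measurable (F i)) ->
  (forall i j, i != j -> F i `&` F j = set0) ->
  P (\big[setU/set0]_(i <- s | q i) F i) = (\sum_(i <- s | q i) P (F i))%E.
Proof.
move=> + mF dF; elim: s => [|a s IH]; first by rewrite !big_nil measure0.
rewrite /= => /andP[nas us]; rewrite !big_cons; case: ifP => qa; last exact: IH us.
rewrite measureU //.
- by congr (_ + _)%E; apply: IH.
- by apply: bigsetU_measurable => i _; apply: mF.
apply/seteqP; split => // w [Fa /in_bigU [i [i1 i2 i3]]].
have ai : a != i by apply/eqP => ai; rewrite ai i1 in nas.
by have := dF _ _ ai; move/seteqP => [h _]; apply: (h w).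
Qed.

Lemma decomp (X : int -> T -> bool) N H B : wind N H ->
  ev X H `&` B = \big[setU/set0]_(f <- index_enum (FF N) | H (rp f)) (cyl X N N (rp f) `&` B).
Proof.
move=> wH; apply/seteqP; split => w.
  move=> [Hw Bw]; apply/in_bigU; exists (wn N (fun t => X t w)); split.
  - by rewrite mem_index_enum.
  - by rewrite (wH _ (fun t => X t w)) //; apply: W1.
  - by split => //; move=> t tw; rewrite (W1 (fun t => X t w) tw).
move/in_bigU => [f [_ Hf [cf Bw]]]; split => //.
rewrite /ev /= (wH _ (rp f)) // => t tw; rewrite (cf t tw).
Qed.

Lemma cyl_disj (X : int -> T -> bool) N (f g : FF N) B : f != g ->
  (cyl X N N (rp f) `&` B) `&` (cyl X N N (rp g) `&` B) = set0.
Proof.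
move=> fg; apply/seteqP; split => // w [[cf _] [cg _]].
move/eqP: fg; apply; apply/ffunP => i.
by rewrite -!(W2 _ i) -(cf _ (W2win i)) -(cg _ (W2win i)).
Qed.

Lemma ev_meas (X : int -> T -> bool) H : bproc_measurable X -> windowed H ->
  measurable (ev X H).
Proof.
move=> mX [N wH]; rewrite -(setIT (ev X H)) (decomp _ _ wH).
by apply: bigsetU_measurable => f _; apply: measurableI => //; apply: cyl_meas.
Qed.

Definition prP (A : set T) := pr P A.

Lemma pr_decomp (X : int -> T -> bool) N H B : bproc_measurable X -> measurable B -> wind N H ->
  pr P (ev X H `&` B) = \sum_(f <- index_enum (FF N) | H (rp f)) pr P (cyl X N N (rp f) `&` B).
Proof.
move=> mX mB wH; rewrite (decomp _ _ wH) /pr measure_big_seq.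
- rewrite sum_fine // => f _; apply: fin_num_measure.
  by apply: measurableI => //; apply: cyl_meas.
- by rewrite /index_enum -enumT enum_uniq.
- by move=> f; apply: measurableI => //; apply: cyl_meas.
- by move=> f g; apply: cyl_disj.
Qed.
End Meas.
Lemma lim_eq (R : realType) (u : nat -> R) (a b : R) :
  (fun n => u n) @ \oo --> a -> (fun n => u n) @ \oo --> b -> a = b.
Proof.
by move=> ha hb; rewrite -(cvg_lim (@Rhausdorff R) ha) (cvg_lim (@Rhausdorff R) hb).
Qed.

Section Limit.
Local Unset Implicit Arguments.
Context (R : realType) (d : measure_display) (Omega : measurableType d)
  (P : probability Omega R) (I : int -> Omega -> bool)
  (dn : nat -> measure_display) (Omegan : forall n, measurableType (dn n))
  (Pn : forall n, probability (Omegan n) R)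
  (In : forall n, int -> Omegan n -> bool).
Hypotheses (mI : bproc_measurable I) (mIn : forall n, bproc_measurable (In n))
  (stat : forall n, bstationary (Pn n) (In n))
  (pos : forall n, (0 < Pn n [set w | In n (0:int) w])%E)
  (conv : forall (u v : nat), (0 < u)%N -> (0 < v)%N -> forall p : int -> bool,
     (fun n => pr (Pn n) (cyl (In n) u v p `&` [set w | In n (0:int) w])
               / pr (Pn n) [set w | In n (0:int) w]) @ \oo
       --> pr P (cyl I u v p)).

Definition Q n H := pr (Pn n) (ev (In n) H `&` [set w | In n (0:int) w])
   / pr (Pn n) [set w | In n (0:int) w].

Lemma pJ0 n : 0 < pr (Pn n) [set w | In n (0:int) w].
Proof.
apply: fine_gt0; rewrite pos /=.
by rewrite (le_lt_trans (probability_le1 _ (mIn n 0))) ?ltry.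
Qed.

Lemma Q_cvg H : windowed H -> (fun n => Q n H) @ \oo --> pr P (ev I H).
Proof.
case/windowed_big => N [N0 wH].
have -> : (fun n => Q n H) = (fun n => \sum_(f <- index_enum (FF N) | H (rp f))
   (pr (Pn n) (cyl (In n) N N (rp f) `&` [set w | In n 0 w]) / pr (Pn n) [set w | In n 0 w])).
  apply/funext => n; by rewrite /Q (pr_decomp (Pn n) (mIn n) (mIn n 0) wH) mulr_suml.
rewrite -(setIT (ev I H)) (pr_decomp P mI measurableT wH).
under eq_bigr do rewrite setIT.
apply: (@cvg_big R _ +%R 0 _ add_continuous) => f _.
exact: conv.
Qed.

Lemma I0_one : pr P [set w | I 0 w] = 1.
Proof.
have h := Q_cvg _ (windowed_pt (fun b => b) 0).
have e : (fun n => Q n (fun x => x 0)) = (fun=> 1).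
  apply/funext => n; rewrite /Q.
  have -> : ev (In n) (fun x => x 0) `&` [set w | In n 0 w] = [set w | In n 0 w].
    by rewrite setIid.
  by rewrite divff // gt_eqF // pJ0.
rewrite e in h; have := @lim_eq R (fun=> 1) _ _ h (cvg_cst (1 : R)); by move=> ->.
Qed.

Lemma palm H s : windowed H -> (forall x, H x -> x 0 && x (- s)) ->
  pr P (ev I H) = pr P (ev I (fun x => H (fun t => x (t + s)))).
Proof.
move=> wH hH.
set H' := fun x => H (fun t => x (t + s)).
have wH' : windowed H' by apply: windowed_shift.
have e : (fun n => Q n H) = (fun n => Q n H').
  apply/funext => n; rewrite /Q.
  have -> : ev (In n) H `&` [set w | In n 0 w] = ev (In n) H.
    by apply/setIidl => w /hH /andP[].
  have -> : ev (In n) H' `&` [set w | In n 0 w] = ev (In n) H'.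
    apply/setIidl => w /hH /andP[_]; by rewrite /= addNr.
  congr (_ / _).
  case: wH => N wH.
  rewrite -(setIT (ev (In n) H)) -(setIT (ev (In n) H')).
  rewrite (pr_decomp (Pn n) (mIn n) measurableT wH).
  have mS : bproc_measurable (fun t => In n (t + s)) by move=> t; apply: mIn.
  rewrite (pr_decomp (Pn n) mS measurableT wH).
  apply: eq_bigr => f _; rewrite !setIT /pr.
  by rewrite (stat n N N (rp f) s).
have h1 := Q_cvg _ wH; have h2 := Q_cvg _ wH'.
rewrite e in h1; exact: (lim_eq h1 h2).
Qed.

Lemma cnt_congr x y a b n : (forall i, (i < n)%N -> x (a + i%:Z)%R = y (b + i%:Z)%R) ->
  cnt x a n = cnt y b n.
Proof. by move=> h; apply: eq_bigr => i _; rewrite h. Qed.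

Lemma cnt_split3 x j u : (j < u)%N ->
  cnt x 1 u = (cnt x 1 j + x (j.+1)%:Z + cnt x (j.+2)%:Z (u - j.+1))%N.
Proof. by move=> ju; rewrite -{1}(subnKC ju) cntD cntS. Qed.

Definition Fj (k l j u : nat) (x : int -> bool) : bool :=
  [&& x 0, x (- (j.+1)%:Z)%R, cnt (fun t => x (- t)%R) 1 j == 0%N,
      (l <= cnt (fun t => x (- t)%R) (j.+2)%:Z (u - j.+1))%N & (k <= cnt x 1 u)%N].

Definition Gj (k l j u : nat) (x : int -> bool) : bool :=
  Fj k l j u (fun t => x (t + (j.+1)%:Z)%R).

Lemma Fj_win k l j u : windowed (Fj k l j u).
Proof.
rewrite /Fj; repeat apply: windowed_and.
- exact: (windowed_pt id 0).
- exact: (windowed_pt id _).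
- exact: (windowed_neg (windowed_cnt (fun c => c == 0%N) _ _)).
- exact: (windowed_neg (windowed_cnt (fun c => l <= c)%N _ _)).
- exact: (windowed_cnt (fun c => k <= c)%N _ _).
Qed.

Lemma Gj_char k l j u x : Gj k l j u x =
  [&& x (j.+1)%:Z, x 0, cnt x 1 j == 0%N,
      (l <= cnt (fun t => x (- t)%R) 1 (u - j.+1))%N & (k <= cnt x (j.+2)%:Z u)%N].
Proof.
rewrite /Gj /Fj add0r addNr.
have -> : cnt (fun t => x (- t + (j.+1)%:Z)%R) 1 j = cnt x 1 j.
  rewrite (cnt_rev (fun t => x (t + (j.+1)%:Z)%R)) cnt_shift; congr cnt; lia.
have -> : cnt (fun t => x (- t + (j.+1)%:Z)%R) (j.+2)%:Z (u - j.+1) =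
          cnt (fun t => x (- t)%R) 1 (u - j.+1).
  by apply: cnt_congr => i _; congr x; lia.
have -> : cnt (fun t => x (t + (j.+1)%:Z)%R) 1 u = cnt x (j.+2)%:Z u.
  by apply: cnt_congr => i _; congr x; lia.
by [].
Qed.

Lemma Fj_disj k l i j u x : Fj k l i u x -> Fj k l j u x -> i = j.
Proof.
rewrite /Fj => /and5P[_ h1 /eqP c1 _ _] /and5P[_ h2 /eqP c2 _ _].
case: (ltngtP i j) => // ij.
  by have := @cnt_pos (fun t => x (- t)%R) 1 j i ij h1; rewrite c2.
by have := @cnt_pos (fun t => x (- t)%R) 1 i j ij h2; rewrite c1.
Qed.

Lemma Gj_disj k l i j u x : Gj k l i u x -> Gj k l j u x -> i = j.
Proof.
rewrite !Gj_char => /and5P[h1 _ /eqP c1 _ _] /and5P[h2 _ /eqP c2 _ _].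
case: (ltngtP i j) => // ij.
  by have := @cnt_pos x 1 j i ij h1; rewrite c2.
by have := @cnt_pos x 1 i j ij h2; rewrite c1.
Qed.

Lemma Fj_mono k l j u u' x : (u <= u')%N -> Fj k l j u x -> Fj k l j u' x.
Proof.
rewrite /Fj => uu /and5P[a b c e f]; apply/and5P; split => //.
- apply: leq_trans e (cnt_prefix _ _ _); exact: leq_sub2r.
- exact: leq_trans f (cnt_prefix _ _ uu).
Qed.

Lemma in_ordU (T : Type) (A : nat -> set T) u w :
  (\big[setU/set0]_(j < u) A j) w <-> exists2 j, (j < u)%N & A j w.
Proof.
elim: u => [|u IH]; first by rewrite big_ord0; split => // -[].
rewrite big_ord_recr /=; split.
  by case => [/IH [j ju Aj]|Au]; [exists j => //; apply: ltnW|exists u].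
move=> [j]; rewrite ltnS leq_eqVlt => /orP[/eqP ->|ju] Aj; first by right.
by left; apply/IH; exists j.
Qed.
Definition Ap k := [set w | ((k%:R)%:E <= Splus R I w)%E].
Definition Am l := [set w | ((l%:R)%:E <= Sminus R I w)%E].
Definition Lset k l u := \big[setU/set0]_(j < u) ev I (Fj k l j u).
Definition Tset k l u := \big[setU/set0]_(j < u) ev I (Gj k l j u).

Lemma Lunion k l : \bigcup_u Lset k l u = [set w | I 0 w] `&` (Ap k `&` Am l.+1).
Proof.
apply/seteqP; split => w.
  move=> [u _]; rewrite /Lset => /(in_ordU Omega (fun j => ev I (Fj k l j u))) [j ju].
  rewrite /ev /Fj => /and5P[x0 h1 /eqP c1 c2 c3].
  split => //; split.
    by apply/Splus_ge; exists u.
  apply/(Splus_ge R (fun t w => I (- t)%R w)); exists u.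
  by rewrite (cnt_split3 _ _ _ ju) c1 /=; move: h1 c2; rewrite /=; case: (I _ w).
move=> [x0 [/Splus_ge [N1 h1] /(Splus_ge R (fun t w => I (- t)%R w)) [N2 h2]]].
have h2' : (l.+1 <= cnt (fun t => I (- t)%R w) 1 (N1 + N2))%N.
  by apply: leq_trans h2 (cnt_prefix _ _ _); apply: leq_addl.
have [j ju [xj cj]] := first_one (leq_trans (ltn0Sn l) h2').
exists (N1 + N2)%N => //; rewrite /Lset; apply/(in_ordU Omega (fun j => ev I (Fj k l j (N1 + N2)))); exists j => //.
rewrite /ev /Fj /=; apply/and5P; split => //; first by rewrite cj.
  by move: h2'; rewrite (cnt_split3 _ _ _ ju) cj; move: xj => /= ->; rewrite add0n add1n ltnS.
by apply: leq_trans h1 (cnt_prefix _ _ _); apply: leq_addr.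
Qed.

Lemma Tunion k l : \bigcup_u Tset k l u = [set w | I 0 w] `&` (Ap k.+1 `&` Am l).
Proof.
apply/seteqP; split => w.
  move=> [u _]; rewrite /Tset => /(in_ordU Omega (fun j => ev I (Gj k l j u))) [j ju].
  rewrite /ev /= Gj_char => /and5P[h1 x0 /eqP c1 c2 c3].
  split => //; split.
    apply/Splus_ge; exists (j.+1 + u)%N.
    by rewrite (cnt_split3 _ _ _ (leq_addr u j.+1)) c1 addKn /= h1.
  by apply/(Splus_ge R (fun t w => I (- t)%R w)); exists (u - j.+1)%N.
move=> [x0 [/Splus_ge [N1 h1] /(Splus_ge R (fun t w => I (- t)%R w)) [N2 h2]]].
have [j jN [xj cj]] := first_one (leq_trans (ltn0Sn k) h1).
have ju : (j < N1 + N2)%N by apply: leq_trans jN (leq_addr _ _).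
exists (N1 + N2)%N => //; rewrite /Tset; apply/(in_ordU Omega (fun j => ev I (Gj k l j (N1 + N2)))); exists j => //.
rewrite /ev /= Gj_char x0 cj eqxx /=.
move: h1; rewrite (cnt_split3 _ _ _ jN) cj xj add0n add1n ltnS => h1.
apply/and3P; split => //.
  apply: leq_trans h2 (cnt_prefix _ _ _); lia.
by apply: leq_trans h1 (cnt_prefix _ _ _); lia.
Qed.
Lemma P_pr (A : set Omega) : measurable A -> P A = (pr P A)%:E.
Proof. by move=> mA; rewrite /pr fineK // fin_num_measure. Qed.

Lemma Ap_meas k : measurable (Ap k).
Proof.
have -> : Ap k = \bigcup_N ev I (fun x => (k <= cnt x 1 N)%N).
  apply/seteqP; split => w.
    by move/Splus_ge => [N h]; exists N.
  by move=> [N _ h]; apply/Splus_ge; exists N.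
apply: bigcupT_measurable => N; apply: ev_meas => //.
exact: (windowed_cnt (fun c => k <= c)%N).
Qed.

Lemma Am_meas l : measurable (Am l).
Proof.
have -> : Am l = \bigcup_N ev I (fun x => (l <= cnt (fun t => x (- t)%R) 1 N)%N).
  apply/seteqP; split => w.
    by move/(Splus_ge R (fun t w => I (- t)%R w)) => [N h]; exists N.
  by move=> [N _ h]; apply/(Splus_ge R (fun t w => I (- t)%R w)); exists N.
apply: bigcupT_measurable => N; apply: ev_meas => //.
exact: (windowed_neg (windowed_cnt (fun c => l <= c)%N _ _)).
Qed.

Lemma I0_int (E : set Omega) : measurable E -> P ([set w | I 0 w] `&` E) = P E.
Proof.
move=> mE; rewrite [RHS](measureDI P mE (mI 0)) setIC.
rewrite -[X in X = _]add0e; congr (_ + _)%E; apply/esym.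
apply: (subset_measure0 (B := ~` [set w | I 0 w])).
- exact: measurableD.
- exact: measurableC.
- by move=> w [].
have h1 : (P [set w | I 0 w] = 1)%E by rewrite P_pr // I0_one.
apply: (eq_trans (probability_setC P (mI 0))). by rewrite h1 subee.
Qed.

Lemma LT_eq k l u : P (Lset k l u) = P (Tset k l u).
Proof.
rewrite /Lset /Tset.
rewrite (measure_semi_additive (fun j => ev I (Fj k l j u)) u).
- rewrite (measure_semi_additive (fun j => ev I (Gj k l j u)) u).
  + apply: eq_bigr => j _.
    have m1 : measurable (ev I (Fj k l j u)) by apply: ev_meas => //; exact: Fj_win.
    have m2 : measurable (ev I (Gj k l j u)).
      by apply: ev_meas => //; exact: (windowed_shift _ (Fj_win _ _ _ _)).
    apply: (eq_trans (P_pr _ m1)); apply/esym; apply: (eq_trans (P_pr _ m2)); apply/esym.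
    congr EFin; apply: (palm (Fj k l j u) (j.+1)%:Z (Fj_win _ _ _ _)).
    by move=> x /and5P[-> -> _ _ _].
  + move=> j; apply: ev_meas => //; exact: (windowed_shift _ (Fj_win _ _ _ _)).
  + move=> i j _ _ [w [hi hj]]; exact: (Gj_disj _ _ _ _ _ _ hi hj).
  + apply: bigsetU_measurable => j _; apply: ev_meas => //.
    exact: (windowed_shift _ (Fj_win _ _ _ _)).
- move=> j; apply: ev_meas => //; exact: Fj_win.
- move=> i j _ _ [w [hi hj]]; exact: (Fj_disj _ _ _ _ _ _ hi hj).
- by apply: bigsetU_measurable => j _; apply: ev_meas => //; exact: Fj_win.
Qed.
Lemma Lmono k l : {homo Lset k l : n m / (n <= m)%N >-> (n <= m)%O}.
Proof.
move=> n m nm; apply/subsetPset => w.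
rewrite /Lset => /(in_ordU Omega (fun j => ev I (Fj k l j n))) [j jn Fw].
apply/(in_ordU Omega (fun j => ev I (Fj k l j m))); exists j.
  exact: leq_trans jn nm.
exact: Fj_mono nm Fw.
Qed.

Lemma Tmono k l : {homo Tset k l : n m / (n <= m)%N >-> (n <= m)%O}.
Proof.
move=> n m nm; apply/subsetPset => w.
rewrite /Tset => /(in_ordU Omega (fun j => ev I (Gj k l j n))) [j jn Fw].
apply/(in_ordU Omega (fun j => ev I (Gj k l j m))); exists j.
  exact: leq_trans jn nm.
exact: Fj_mono nm Fw.
Qed.

Lemma key k l : P (Ap k `&` Am l.+1) = P (Ap k.+1 `&` Am l).
Proof.
have mL u : measurable (Lset k l u).
  by apply: bigsetU_measurable => j _; apply: ev_meas => //; exact: Fj_win.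
have mT u : measurable (Tset k l u).
  by apply: bigsetU_measurable => j _; apply: ev_meas => //; exact: (windowed_shift _ (Fj_win _ _ _ _)).
have hL := nondecreasing_cvg_mu (mu := P) mL (bigcupT_measurable _ mL) (Lmono k l).
have hT := nondecreasing_cvg_mu (mu := P) mT (bigcupT_measurable _ mT) (Tmono k l).
have e : (P \o Lset k l) = (P \o Tset k l) by apply/funext => u /=; apply: LT_eq.
rewrite e in hL.
have h := cvg_unique _ hL hT.
have m1 : measurable (Ap k `&` Am l.+1) by apply: measurableI; [apply: Ap_meas|apply: Am_meas].
have m2 : measurable (Ap k.+1 `&` Am l) by apply: measurableI; [apply: Ap_meas|apply: Am_meas].
apply: (eq_trans (esym (I0_int _ m1))); apply: (eq_trans _ (I0_int _ m2)).
rewrite -Lunion -Tunion; exact: h.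
Qed.

Lemma Ap0 : Ap 0 = setT.
Proof. by apply/seteqP; split => // w _; exact: (@Splus_ge0 R Omega I w). Qed.

Lemma Am0 : Am 0 = setT.
Proof. by apply/seteqP; split => // w _; exact: (@Splus_ge0 R Omega (fun t w => I (- t)%R w) w). Qed.

Lemma phi1 k l : P (Ap k `&` Am l) = P (Ap (k + l)).
Proof.
elim: l k => [|l IH] k; first by rewrite Am0 setIT addn0.
by rewrite key IH addSnnS.
Qed.

Lemma phi2 k l : P (Ap k `&` Am l) = P (Am (k + l)).
Proof.
elim: k l => [|k IH] l; first by rewrite Ap0 setTI add0n.
by rewrite -key IH addSnnS.
Qed.
End Limit.
From mathcomp Require Import lra.
Section Abstract.
Local Unset Implicit Arguments.
Context (d : measure_display) (T : measurableType d) (R : realType) (P : probability T R).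

Definition ge_set (f : T -> \bar R) (n : nat) := [set w | ((n%:R)%:E <= f w)%E].
Definition Vp (f : T -> \bar R) := forall w, f w = +oo%E \/ exists n : nat, f w = (n%:R)%:E.

Lemma eqn_set f n : Vp f -> [set w | f w = (n%:R)%:E] = ge_set f n `\` ge_set f n.+1.
Proof.
move=> fV; apply/seteqP; split => w /=.
  by move=> e; rewrite /ge_set /= e; split; rewrite lee_fin ler_nat // ltnn.
move=> [h1 /negP h2]; rewrite /ge_set /= in h1 h2; case: (fV w) => [e|[m e]]; rewrite e in h1 h2 *.
  by move: h2; rewrite leey.
move: h1 h2; rewrite !lee_fin !ler_nat -leqNgt => h1 h2.
by have -> : m = n by lia.
Qed.

Lemma eqoo_set f : Vp f -> [set w | f w = +oo%E] = \bigcap_n ge_set f n.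
Proof.
move=> fV; apply/seteqP; split => w /=.
  by move=> e n _; rewrite /ge_set /= e leey.
move=> h; case: (fV w) => [//|[m e]].
by have := h m.+1 I; rewrite /ge_set /= e lee_fin ler_nat ltnn.
Qed.

Lemma pr_ge0 A : 0 <= pr P A.
Proof. by rewrite /pr fine_ge0. Qed.

Lemma pr_le1 A : measurable A -> pr P A <= 1.
Proof.
move=> mA; rewrite /pr -lee_fin fineK ?fin_num_measure //.
exact: probability_le1.
Qed.

Lemma pr_le A B : measurable A -> measurable B -> A `<=` B -> pr P A <= pr P B.
Proof.
move=> mA mB AB; rewrite /pr fine_le ?fin_num_measure //.
by apply: le_measure => //; rewrite inE.
Qed.

Lemma pr_setD A B : measurable A -> measurable B -> B `<=` A ->
  pr P (A `\` B) = pr P A - pr P B.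
Proof.
move=> mA mB BA.
have h := measureD (mu := P) mA mB (le_lt_trans (probability_le1 P mA) (ltry 1)).
rewrite (setIidr BA) in h.
rewrite /pr; have -> : fine (P (A `\` B)) = fine (P A - P B)%E by congr fine.
by rewrite fineB ?fin_num_measure.
Qed.

Lemma P_pr' A : measurable A -> P A = (pr P A)%:E.
Proof. by move=> mA; rewrite /pr fineK // fin_num_measure. Qed.

Section FG.
Variables (f g : T -> \bar R).
Hypotheses (fV : Vp f) (gV : Vp g) (mf : forall n, measurable (ge_set f n))
  (mg : forall n, measurable (ge_set g n))
  (h1 : forall k l, P (ge_set f k `&` ge_set g l) = P (ge_set f (k + l))).

Let psi m := pr P (ge_set f m).

Lemma mfeq n : measurable [set w | f w = (n%:R)%:E].
Proof. by rewrite eqn_set //; apply: measurableD. Qed.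
Lemma mgeq n : measurable [set w | g w = (n%:R)%:E].
Proof. by rewrite eqn_set //; apply: measurableD. Qed.
Lemma mfoo : measurable [set w | f w = +oo%E].
Proof. by rewrite eqoo_set //; apply: bigcapT_measurable. Qed.
Lemma mgoo : measurable [set w | g w = +oo%E].
Proof. by rewrite eqoo_set //; apply: bigcapT_measurable. Qed.

Lemma c_eq k : pr P [set w | f w = (k%:R)%:E] = psi k - psi k.+1.
Proof.
rewrite eqn_set // pr_setD // => w; rewrite /ge_set /= => /(le_trans _); apply.
by rewrite lee_fin ler_nat.
Qed.

Lemma c3 k l : pr P ([set w | f w = (k%:R)%:E] `&` ge_set g l) = psi (k + l) - psi (k + l).+1.
Proof.
have -> : [set w | f w = (k%:R)%:E] `&` ge_set g l =
   (ge_set f k `&` ge_set g l) `\` (ge_set f k.+1 `&` ge_set g l).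
  rewrite eqn_set //; apply/seteqP; split => w /=.
    by move=> [[a b] c]; split => // -[].
  by move=> [[a b] c]; split => //; split => // e; apply: c.
have sub : ge_set f k.+1 `&` ge_set g l `<=` ge_set f k `&` ge_set g l.
  move=> w [a b]; split => //; apply: le_trans a; by rewrite lee_fin ler_nat.
rewrite pr_setD //; try by apply: measurableI.
by rewrite /psi /pr !h1 addSn.
Qed.

Lemma c4 k l : pr P ([set w | f w = (k%:R)%:E] `&` [set w | g w = (l%:R)%:E]) =
  pr P [set w | f w = ((k + l)%:R)%:E] - pr P [set w | f w = ((k + l).+1%:R)%:E].
Proof.
have -> : [set w | f w = (k%:R)%:E] `&` [set w | g w = (l%:R)%:E] =
   ([set w | f w = (k%:R)%:E] `&` ge_set g l) `\` ([set w | f w = (k%:R)%:E] `&` ge_set g l.+1).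
  rewrite (eqn_set g) //; apply/seteqP; split => w /=.
    by move=> [a [b c]]; split => // -[].
  by move=> [[a b] c]; split => //; split => // e; apply: c.
have sub : [set w | f w = (k%:R)%:E] `&` ge_set g l.+1 `<=` [set w | f w = (k%:R)%:E] `&` ge_set g l.
  move=> w [a b]; split => //; apply: le_trans b; by rewrite lee_fin ler_nat.
rewrite pr_setD //; try by apply: measurableI => //; apply: mfeq.
by rewrite !c3 !c_eq addnS.
Qed.

Lemma zero n : P ([set w | f w = (n%:R)%:E] `&` [set w | g w = +oo%E]) = 0%E.
Proof.
have mA : measurable ([set w | f w = (n%:R)%:E] `&` [set w | g w = +oo%E]).
  by apply: measurableI; [apply: mfeq|apply: mgoo].
set e := pr P ([set w | f w = (n%:R)%:E] `&` [set w | g w = +oo%E]).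
have he l : e <= psi (n + l) - psi (n + l).+1.
  rewrite -c3; apply: pr_le => //.
    by apply: measurableI => //; apply: mfeq.
  by move=> w [a b]; split => //; rewrite /ge_set /= b leey.
have hM M : M%:R * e <= psi n - psi (n + M).
  elim: M => [|M IH]; first by rewrite mul0r addn0 subrr.
  have := he M; rewrite -addnS -[M.+1]addn1 natrD; lra.
have e0 : 0 <= e by apply: pr_ge0.
have b1 M : psi n - psi (n + M) <= 1.
  have := pr_le1 _ (mf n); have := pr_ge0 (ge_set f (n + M)); rewrite /psi; lra.
have e00 : e = 0.
  apply/eqP; rewrite eq_le e0 andbT; apply/negP => /negP; rewrite -ltNge => ep.
  have := hM (Num.truncn (e^-1)).+1; have := b1 (Num.truncn (e^-1)).+1.
  have := truncnS_gt (e^-1); set M := ((Num.truncn _).+1%:R).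
  move=> h1' h2' h3'.
  have : 1 < M * e.
    by rewrite -(mulVf (lt0r_neq0 ep)) ltr_pM2r.
  lra.
by rewrite P_pr' // -/e e00.
Qed.
End FG.
End Abstract.
Arguments Vp {d T R}. Arguments ge_set {d T R}.
Section Atoms.
Local Unset Implicit Arguments.
Context (d : measure_display) (T : measurableType d) (R : realType) (P : probability T R).

Definition hopt (o : option nat) : \bar R := if o is Some n then (n%:R)%:E else +oo%E.

Lemma hopt_inj : injective hopt.
Proof.
case=> [n|] [m|] //= h.
by case: h => /eqP; rewrite eqr_nat => /eqP ->.
Qed.

Lemma Vp_hopt (f : T -> \bar R) : Vp f -> forall w, exists o, f w = hopt o.
Proof. by move=> fV w; case: (fV w) => [e|[n e]]; [exists None|exists (Some n)]. Qed.

Variable A : set (\bar R * \bar R).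

Definition Eat (u v : T -> \bar R) (n : nat) := [set w | exists t : option nat * option nat,
  [/\ pickle_inv n = Some t, u w = hopt t.1, v w = hopt t.2 & A (hopt t.1, hopt t.2)]].

Lemma Eat_union u v : Vp u -> Vp v -> [set w | A (u w, v w)] = \bigcup_n Eat u v n.
Proof.
move=> uV vV; apply/seteqP; split => w /=.
  move=> Aw; have [a ea] := Vp_hopt u uV w; have [b eb] := Vp_hopt v vV w.
  exists (pickle (a, b)) => //; exists (a, b); split => //=; first by rewrite pickleK_inv.
  by rewrite -ea -eb.
by move=> [n _ [t [_ -> -> h]]].
Qed.

Lemma Eat_triv u v : trivIset setT (Eat u v).
Proof.
move=> n m _ _ [w [[t [pt ut vt _]] [t' [pt' ut' vt' _]]]].
have tt' : t = t'.
  case: t t' ut vt pt ut' vt' pt' => [a b] [a' b'] /= -> -> _ /hopt_inj -> /hopt_inj -> _ //.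
move: (@pickle_invK (option nat * option nat)%type n) (@pickle_invK (option nat * option nat)%type m).
by rewrite pt pt' tt' /= => -> ->.
Qed.

Lemma Eat_char u v n : Eat u v n = match pickle_inv n with
  | Some t => [set w | u w = hopt t.1 /\ v w = hopt t.2] `&` [set _ | A (hopt t.1, hopt t.2)]
  | None => set0 end.
Proof.
apply/seteqP; split => w.
  by move=> [t [-> a b c]] /=; split.
case E: (pickle_inv n) => [t|] //= [[a b] c]; exists t; split => //.
Qed.

Lemma cst_set (Q : Prop) : [set _ : T | Q] = setT \/ [set _ : T | Q] = set0.
Proof.
case: (pselect Q) => q; [left|right]; apply/seteqP; split => // w //.
Qed.

Lemma Eat_meas u v n : (forall a b, measurable [set w | u w = hopt a /\ v w = hopt b]) ->
  measurable (Eat u v n).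
Proof.
move=> mu; rewrite Eat_char; case: (pickle_inv n) => [t|] //.
by case: (cst_set (A (hopt t.1, hopt t.2))) => ->; [rewrite setIT|rewrite setI0].
Qed.

Lemma atoms (f1 f2 g1 g2 : T -> \bar R) : Vp f1 -> Vp f2 -> Vp g1 -> Vp g2 ->
  (forall a b, measurable [set w | f1 w = hopt a /\ f2 w = hopt b]) ->
  (forall a b, measurable [set w | g1 w = hopt a /\ g2 w = hopt b]) ->
  (forall a b, P [set w | f1 w = hopt a /\ f2 w = hopt b] =
               P [set w | g1 w = hopt a /\ g2 w = hopt b]) ->
  P [set w | A (f1 w, f2 w)] = P [set w | A (g1 w, g2 w)].
Proof.
move=> V1 V2 V3 V4 mF mG hP.
rewrite (Eat_union f1 f2) // (Eat_union g1 g2) //.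
rewrite measure_bigcup; last first.
  exact: Eat_triv.
  by move=> n _; apply: Eat_meas.
rewrite measure_bigcup; last first.
  exact: Eat_triv.
  by move=> n _; apply: Eat_meas.
apply: eq_eseriesr => n _; rewrite !Eat_char; case: (pickle_inv n) => [t|] //.
by case: (cst_set (A (hopt t.1, hopt t.2))) => [->|->]; [rewrite !setIT; apply: hP|rewrite !setI0].
Qed.
End Atoms.
Lemma swap_set (T : Type) (F G : T -> Prop) : [set w | F w /\ G w] = [set w | G w /\ F w].
Proof. by apply/seteqP; split => w [a b]. Qed.

Unset Implicit Arguments.

Theorem theorem3p2 (R : realType)
  (d : measure_display) (Omega : measurableType d) (P : probability Omega R)
  (I : int -> Omega -> bool)
  (dn : nat -> measure_display) (Omegan : forall n, measurableType (dn n))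
  (Pn : forall n, probability (Omegan n) R)
  (In : forall n, int -> Omegan n -> bool) :
  bproc_measurable I ->
  (forall n, bproc_measurable (In n)) ->
  (forall n, bstationary (Pn n) (In n)) ->
  (forall n, (0 < Pn n [set w | In n (0:int) w])%E) ->
  (forall (u v : nat), (0 < u)%N -> (0 < v)%N -> forall p : int -> bool,
     (fun n => pr (Pn n) (cyl (In n) u v p `&` [set w | In n (0:int) w])
               / pr (Pn n) [set w | In n (0:int) w]) @ \oo
       --> pr P (cyl I u v p)) ->
  let Sp := Splus R I in
  let Sm := Sminus R I in
  (* (a) symmetry of the joint law of (S_-, S_+) *)
  (forall A : set (\bar R * \bar R), measurable A ->
     P [set w | A (Sm w, Sp w)] = P [set w | A (Sp w, Sm w)]) /\
  (* in particular S_- and S_+ have the same law *)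
  (forall A : set (\bar R), measurable A ->
     P [set w | A (Sm w)] = P [set w | A (Sp w)]) /\
  (forall k l : nat,
     pr P ([set w | Sp w = (k%:R)%:E] `&` [set w | ((l%:R)%:E <= Sm w)%E])
     = pr P [set w | Sp w = ((k + l)%:R)%:E]) /\
  (forall k l : nat,
     pr P ([set w | Sp w = (k%:R)%:E] `&` [set w | Sm w = (l%:R)%:E])
     = pr P [set w | Sp w = ((k + l)%:R)%:E]
       - pr P [set w | Sp w = ((k + l).+1%:R)%:E]) /\
  (* (b) the common pmf is nonincreasing on N_0 *)
  (forall k : nat,
     pr P [set w | Sp w = (k.+1%:R)%:E] <= pr P [set w | Sp w = (k%:R)%:E]).
Proof.
move=> mI mIn stat pos conv Sp Sm.
have fV : Vp Sp := fun w => Splus_val R I w.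
have gV : Vp Sm := fun w => Splus_val R (fun t w => I (- t)%R w) w.
have mf : forall n, measurable (ge_set Sp n) := Ap_meas R d Omega I mI.
have mg : forall n, measurable (ge_set Sm n) := Am_meas R d Omega I mI.
have h1 : forall k l, P (ge_set Sp k `&` ge_set Sm l) = P (ge_set Sp (k + l)) :=
  phi1 R d Omega P I dn Omegan Pn In mI mIn stat pos conv.
have h2 : forall k l, P (ge_set Sm k `&` ge_set Sp l) = P (ge_set Sm (k + l)).
  move=> k l; rewrite setIC addnC.
  exact: (phi2 R d Omega P I dn Omegan Pn In mI mIn stat pos conv l k).
have c4f := c4 d Omega R P Sp Sm fV gV mf mg h1.
have c3f := c3 d Omega R P Sp Sm fV mf mg h1.
have cef := c_eq d Omega R P Sp fV mf.
have zf := zero d Omega R P Sp Sm fV gV mf mg h1.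
have zg := zero d Omega R P Sm Sp gV fV mg mf h2.
have mfe := mfeq d Omega R Sp fV mf.
have mge := mfeq d Omega R Sm gV mg.
have mfo := mfoo d Omega R Sp fV mf.
have mgo := mfoo d Omega R Sm gV mg.
have mat : forall (u v : Omega -> \bar R), (forall n, measurable [set w | u w = (n%:R)%:E]) ->
    measurable [set w | u w = +oo%E] ->
    (forall n, measurable [set w | v w = (n%:R)%:E]) -> measurable [set w | v w = +oo%E] ->
    forall a b, measurable [set w | u w = hopt R a /\ v w = hopt R b].
  move=> u v mu1 mu2 mv1 mv2 a b.
  rewrite -[X in measurable X]/([set w | u w = hopt R a] `&` [set w | v w = hopt R b]).
  by apply: measurableI; [case: a => [a|] /=|case: b => [b|] /=].
have joint : forall A : set (\bar R * \bar R),
    P [set w | A (Sm w, Sp w)] = P [set w | A (Sp w, Sm w)].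
  move=> A; apply: (atoms d Omega R P A Sm Sp Sp Sm gV fV fV gV); try by apply: mat.
  move=> [a|] [b|] /=.
  - rewrite swap_set.
    rewrite -[X in P X = _]/([set w | Sp w = (b%:R)%:E] `&` [set w | Sm w = (a%:R)%:E]).
    rewrite -[X in _ = P X]/([set w | Sp w = (a%:R)%:E] `&` [set w | Sm w = (b%:R)%:E]).
    rewrite (P_pr' d Omega R P) ?(P_pr' d Omega R P _ (measurableI _ _ (mfe a) (mge b))) //.
      by rewrite c4f c4f addnC.
    exact: measurableI.
  - apply: (eq_trans (zg a)); apply/esym; exact: (zf a).
  - rewrite swap_set [X in _ = P X]swap_set.
    apply: (eq_trans (zf b)); apply/esym; exact: (zg b).
  - by rewrite swap_set.
split; first by move=> A _; exact: joint.
split; first by move=> A _; exact: (joint [set p | A p.1]).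
split.
  move=> k l; apply: (eq_trans (c3f k l)); apply/esym; exact: (cef (k + l)%N).
split; first by move=> k l; exact: (c4f k l).
move=> k; have := c4f k 0; rewrite addn0 => e.
by rewrite -subr_ge0 -e; apply: pr_ge0.
Qed.
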